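(* Let $f:\mathbb{R}^n\to\mathbb{R}$ be a differentiable convex function, let $B'\ge B>0$, $\mathbf{x}\in[-B',B']^n$, $\mathbf{x}^*\in[-B,B]^n$ and $0<\lambda\le1$. For $i\in[n]$ define $\zeta_i=\lambda$ if $x_i=0$; $\zeta_i=0$ if $|x_i|\ge B$ and $\nabla_i f(\mathbf{x})\cdot x_i<0$; $\zeta_i=1$ otherwise; and let $i^*\in\arg\max_i\zeta_i|\nabla_i f(\mathbf{x})|$. Then at least one of the following holds: (i) $|\nabla_{i^*}f(\mathbf{x})|\ge\dfrac{f(\mathbf{x})-f(\mathbf{x}^* )}{\|\mathbf{x}^*\|_1+\lambda\|\mathbf{x}\|_1}$; (ii) $|\nabla_{i^*}f(\mathbf{x})|\ge\dfrac{f(\mathbf{x})-f(\mathbf{x}^* )}{\lambda^{-1}\|\mathbf{x}^*\|_1+\|\mathbf{x}\|_1}$ and $x_{i^*}\neq0$. *)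

(* Defs.v *)
From HB Require Import structures.
From mathcomp Require Import all_boot all_order all_algebra.
From mathcomp Require Import all_classical all_reals all_analysis.
Set Implicit Arguments. Unset Strict Implicit. Unset Printing Implicit Defensive.
Import Order.TTheory GRing.Theory Num.Theory.
Import numFieldNormedType.Exports.
Local Open Scope classical_set_scope.
Local Open Scope ring_scope.

Definition grad_i {R : realType} {n : nat} (f : 'rV[R]_n -> R) (x : 'rV[R]_n)
  (i : 'I_n) : R := 'D_(delta_mx 0 i) f x.

Definition l1norm {R : realType} {n : nat} (x : 'rV[R]_n) : R :=
  \sum_(i < n) `|x 0 i|.

Definition zeta {R : realType} {n : nat} (B lam : R) (f : 'rV[R]_n -> R)
  (x : 'rV[R]_n) (i : 'I_n) : R :=
  if x 0 i == 0 then lam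
  else if (B <= `|x 0 i|) && (grad_i f x i * x 0 i < 0) then 0
  else 1.

(* Main.v *)
Require Import Defs.
From HB Require Import structures.
From mathcomp Require Import all_boot all_order all_algebra.
From mathcomp Require Import all_classical all_reals all_analysis.
From mathcomp Require Import ring lra.
Import Order.TTheory GRing.Theory Num.Theory.
Import numFieldNormedType.Exports.
Local Open Scope classical_set_scope.
Local Open Scope ring_scope.

Lemma grad_ineq (R : realType) (n : nat) (f : 'rV[R]_n -> R)
  (f_diff : forall y : 'rV[R]_n, differentiable f y)
  (f_cvx : convex_function [set: 'rV[R]_n] f) (x xs : 'rV[R]_n) :
  'D_(xs - x) f x <= f xs - f x.
Proof.
have hd : derivable f x (xs - x) by apply: diff_derivable.
have hl := hd; move: hl => /cvg_ex [l hl].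
have el : 'D_(xs - x) f x = l by rewrite /derive (cvg_lim _ hl).
rewrite el.
have hl' : (fun h : R => h^-1 *: ((f \o shift x) (h *: (xs - x)) - f x)) @ (0:R)^'+ --> l.
  apply: cvg_trans hl; apply: cvg_app. move=> A. rewrite !nbhs_simpl /dnbhs /within /=. apply: filterS => y Hy y0.
  by apply: Hy; rewrite gt_eqF.
apply: (cvgr_to_le hl').
near=> h.
have h0 : 0 < h by near: h; exact: nbhs_right_gt.
have h1 : h < 1 by near: h; exact: nbhs_right_lt.
have := f_cvx (Itv01 (ltW h0) (ltW h1)) xs x (in_setT xs) (in_setT x).
rewrite /= /conv /=.
move=> H0.
have H : f (h *: xs + (1 - h) *: x) <= h * f xs + (1 - h) * f x by exact: H0.
move: H; clear H0.
have -> : h *: xs + (1 - h) *: x = h *: (xs - x) + x.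
  by rewrite scalerBl scale1r scalerBr addrA addrAC.
move=> H.
rewrite [X in X <= _]/GRing.scale /= mulrC ler_pdivrMr //.
nra.
Unshelve. all: by end_near. Qed.

Lemma D_sum (R : realType) (n : nat) (f : 'rV[R]_n -> R)
  (f_diff : forall y : 'rV[R]_n, differentiable f y) (x v : 'rV[R]_n) :
  'D_v f x = \sum_(i < n) v 0 i * grad_i f x i.
Proof.
rewrite deriveE // {1}(row_sum_delta v) linear_sum /=.
apply: eq_bigr => i _.
by rewrite linearZ /= /grad_i deriveE.
Qed.

Lemma div_helper (R : realType) (D G E : R) :
  0 <= G -> 0 <= E -> D <= G * E -> D / E <= G.
Proof.
move=> hG hE hD; have [->|E0] := eqVneq E 0; first by rewrite invr0 mulr0.
by rewrite ler_pdivrMr ?lt_def ?E0.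
Qed.

Lemma l1_ge0 (R : realType) (n : nat) (x : 'rV[R]_n) : 0 <= l1norm x.
Proof. by apply: sumr_ge0 => i _. Qed.

Theorem lemma4 (R : realType) (n : nat) (f : 'rV[R]_n -> R)
  (f_diff : forall y : 'rV[R]_n, differentiable f y)
  (f_cvx : convex_function [set: 'rV[R]_n] f)
  (B B' lam : R) (x xs : 'rV[R]_n)
  (hB : 0 < B) (hBB' : B <= B')
  (hx : forall i, `|x 0 i| <= B')
  (hxs : forall i, `|xs 0 i| <= B)
  (hlam0 : 0 < lam) (hlam1 : lam <= 1)
  (istar : 'I_n)
  (histar : forall j : 'I_n,
     zeta B lam f x j * `|grad_i f x j| <= zeta B lam f x istar * `|grad_i f x istar|) :
  `|grad_i f x istar| >= (f x - f xs) / (l1norm xs + lam * l1norm x)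
  \/ (`|grad_i f x istar| >= (f x - f xs) / (lam^-1 * l1norm xs + l1norm x)
      /\ x 0 istar != 0).
Proof.
set g := grad_i f x.
set M := zeta B lam f x istar * `|g istar|.
have hD : f x - f xs <= \sum_(i < n) (x 0 i - xs 0 i) * g i.
  have := @grad_ineq R n f f_diff f_cvx x xs; rewrite (@D_sum R n f f_diff) => H.
  have -> : \sum_(i < n) (x 0 i - xs 0 i) * g i
      = - \sum_(i < n) (xs - x) 0 i * grad_i f x i.
    by rewrite -sumrN; apply: eq_bigr => i _; rewrite !mxE /g; ring.
  lra.
have hz0 : forall j, 0 <= zeta B lam f x j.
  by move=> j; rewrite /zeta; case: ifP => _; [exact: ltW|case: ifP].
have hM0 : 0 <= M by rewrite /M mulr_ge0.
set c := lam^-1.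
have hc1 : 1 <= c by rewrite /c invf_ge1.
have hlc : lam * c = 1 by rewrite /c mulfV // gt_eqF.
have hterm : forall i, (x 0 i - xs 0 i) * g i <= M * (c * `|xs 0 i| + `|x 0 i|).
  move=> i; have Hi := histar i; rewrite -/g -/M /zeta in Hi.
  have hsg : - (xs 0 i * g i) <= `|xs 0 i| * `|g i|.
    by rewrite -normrM -normrN ler_norm.
  have hsg' : xs 0 i * g i <= `|xs 0 i| * `|g i|.
    by rewrite -normrM ler_norm.
  have hxg : x 0 i * g i <= `|x 0 i| * `|g i|.
    by rewrite -normrM ler_norm.
  have hs0 : 0 <= `|xs 0 i| by [].
  have hg0 : 0 <= `|g i| by [].
  move: Hi; case: eqP => [->|xi0].
    move=> Hi.
    have hb : `|g i| <= M * c by rewrite /c ler_pdivlMr // mulrC.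
    have := ler_wpM2l hs0 hb.
    rewrite normr0; nra.
  case: ifP => [/andP[hBx hneg]|_] Hi.
    have h1 : `|xs 0 i| * `|g i| <= `|x 0 i| * `|g i|.
      by apply: ler_wpM2r => //; apply: le_trans (hxs i) hBx.
    have h2 : `|x 0 i| * `|g i| = - (x 0 i * g i).
      rewrite -normrM mulrC ltr0_norm //.
    have : 0 <= M * (c * `|xs 0 i| + `|x 0 i|).
      by rewrite mulr_ge0 // addr_ge0 // mulr_ge0 // ltW // (lt_le_trans _ hc1).
    nra.
  rewrite mul1r in Hi.
  have h1 : `|xs 0 i| <= c * `|xs 0 i| by rewrite ler_peMl.
  have h3 := ler_wpM2l hs0 Hi.
  have hx0 : 0 <= `|x 0 i| by [].
  have h4 := ler_wpM2l hx0 Hi.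
  have h5 := ler_wpM2l hM0 h1.
  nra.
have hsum : f x - f xs <= M * (c * l1norm xs + l1norm x).
  apply: le_trans hD _.
  rewrite /l1norm mulr_sumr -big_split mulr_sumr.
  by apply: ler_sum => i _; exact: hterm.
have hE : 0 <= c * l1norm xs + l1norm x.
  by rewrite addr_ge0 ?l1_ge0 // mulr_ge0 ?l1_ge0 // ltW // (lt_le_trans _ hc1).
case: (eqVneq (x 0 istar) 0) => [x0|x0].
  left; have hMe : M = lam * `|g istar| by rewrite /M /zeta x0 eqxx.
  apply: div_helper => //.
    by rewrite addr_ge0 ?l1_ge0 // mulr_ge0 ?l1_ge0 // ltW.
  have -> : `|g istar| * (l1norm xs + lam * l1norm x) = M * (c * l1norm xs + l1norm x).
    by rewrite hMe /c; field; rewrite gt_eqF.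
  exact: hsum.
right; split => //.
have hz1 : zeta B lam f x istar <= 1 by rewrite /zeta (negbTE x0); case: ifP.
apply: div_helper => //.
apply: le_trans hsum _.
by apply: ler_wpM2r => //; rewrite /M ler_piMl.
Qed.
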